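(* Let $A=KQ/I$ be a gentle algebra over an algebraically closed field $K$. If $Q$ contains a subquiver whose underlying graph is of type $\mathbb{D}_4$, then the trivial extension $T(A)=A\ltimes DA$ is neither a Brauer line algebra nor a Brauer star algebra.
   Context: $D=\mathrm{Hom}_K(-,K)$; $T(A)$ has underlying space $A\oplus DA$ with multiplication $(a,f)(b,g)=(ab,ag+fb)$. Gentle: every vertex of $Q$ has at most two incoming and at most two outgoing arrows; for each arrow $\alpha$ there is at most one arrow $\beta$ with $\alpha\beta\in I$, at most one $\gamma$ with $\gamma\alpha\in I$, at most one $\beta'$ with $\alpha\beta'\notin I$ and at most one $\gamma'$ with $\gamma'\alpha\notin I$ (composable arrows); $I$ is admissible and generated by paths of length 2. $\mathbb{D}_4$ is the star graph with one central vertex and three neighbours. Brauer graph algebras: for a finite connected graph $G$ with multiplicity $m\equiv1$ and a cyclic ordering of edges around each vertex, $Q_G$ has vertices the edges of $G$ and an arrow $i\to j$ when $E_j$ immediately follows $E_i$ in the cyclic order around a common vertex; each vertex $v$ of $G$ of degree $\ge2$ yields an oriented cycle $C_v$; $I_G$ is generated by $C_v-C_{v'}$ for the two cycles at a vertex $i$ of $Q_G$ (where $v,v'$ are the endpoints of $E_i$), $C_v\alpha_1$ for each cycle $C_v=\alpha_1\cdots\alpha_k$ at $i$, and $\alpha\beta$ whenever $\alpha\beta$ lies in no such cycle; $B_G=KQ_G/I_G$. A Brauer line algebra is $B_G$ (with $m\equiv1$) where $G$ is a path graph $\circ-\circ-\cdots-\circ$ with $n$ edges; a Brauer star algebra is $B_G$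 (with $m\equiv1$) where $G$ is a star with $n$ edges all incident to one central vertex, cyclically ordered; equivalently it is the symmetric Nakayama algebra given by an oriented $n$-cycle with relation $\alpha^{n+1}=0$. *)

(* Defs.v *)
From HB Require Import structures.
From mathcomp Require Import all_boot all_order all_algebra all_field.
Set Implicit Arguments. Unset Strict Implicit. Unset Printing Implicit Defensive.
Import GRing.Theory.
Local Open Scope ring_scope.

Section Defs.
Variable K : fieldType.

(* Paths are written left to right: the path [:: a1; ...; ak] has
   t a_i = s a_(i+1) and is evaluated as the product x a1 * ... * x ak.    *)

Definition path_eval (B : algType K) (Ar : Type) (x : Ar -> B) (p : seq Ar) : B :=
  \prod_(a <- p) x a.

Definition rel_eval (B : algType K) (Ar : Type) (x : Ar -> B)
    (r : seq (K * seq Ar)) : B :=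
  \sum_(c <- r) c.1 *: path_eval x c.2.

(* e, x satisfy the defining relations of the path algebra KQ:
   complete set of orthogonal idempotents, and a = e_(s a) a e_(t a). *)
Definition quiver_gens (B : algType K) (V Ar : finType) (s t : Ar -> V)
    (e : V -> B) (x : Ar -> B) : Prop :=
  [/\ \sum_(i : V) e i = 1,
      (forall i j : V, e i * e j = if i == j then e i else 0) &
      (forall a : Ar, x a = e (s a) * x a * e (t a))].

Definition rels_hold (B : algType K) (Ar : eqType) (x : Ar -> B)
    (R : seq (seq (K * seq Ar))) : Prop :=
  forall r, r \in R -> rel_eval x r = 0.

Definition alg_hom (B C : algType K) (f : B -> C) : Prop :=
  [/\ (forall (k : K) (u v : B), f (k *: u + v) = k *: f u + f v),
      (forall u v : B, f (u * v) = f u * f v) & f 1 = 1].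

(* (B, e, x) is (isomorphic to) K Q / I, where I is the ideal of KQ
   generated by the relations R: it is the universal algebra generated by
   the vertex idempotents and arrows subject to the relations of KQ and R. *)
Definition presents (B : algType K) (V Ar : finType) (s t : Ar -> V)
    (R : seq (seq (K * seq Ar))) (e : V -> B) (x : Ar -> B) : Prop :=
  [/\ quiver_gens s t e x, rels_hold x R &
      forall (C : algType K) (e' : V -> C) (x' : Ar -> C),
        quiver_gens s t e' x' -> rels_hold x' R ->
        exists! f : B -> C,
          [/\ alg_hom f, (forall i, f (e i) = e' i) & (forall a, f (x a) = x' a)]].

Definition monomial_rels (Ar : Type) (Rq : seq (Ar * Ar)) : seq (seq (K * seq Ar)) :=
  [seq [:: (1, [:: p.1; p.2])] | p <- Rq].

(* A = KQ/I with e, x the images of vertices and arrows, I generated by the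
   length-2 paths in Rq, I admissible, and (Q, I) gentle.  A path lies in I
   iff its image in A = KQ/I is zero.                                       *)
Definition gentle_presentation (A : algType K) (V Ar : finType) (s t : Ar -> V)
    (Rq : seq (Ar * Ar)) (e : V -> A) (x : Ar -> A) : Prop :=
  [/\ presents s t (monomial_rels Rq) e x,
      (forall p, p \in Rq -> t p.1 = s p.2),
      (* admissible: R^m \subseteq I for some m (I \subseteq R^2 holds since
         the generators have length 2) *)
      (exists m : nat, forall p : m.-tuple Ar, path_eval x p = 0),
      (forall v : V, #|[set a | s a == v]| <= 2 /\ #|[set a | t a == v]| <= 2)%N &
      (forall a : Ar,
        [/\ (#|[set b | (t a == s b) && ((x a * x b)%R == 0%R)]| <= 1)%N,
            (#|[set c | (t c == s a) && ((x c * x a)%R == 0%R)]| <= 1)%N,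
            (#|[set b | (t a == s b) && ((x a * x b)%R != 0%R)]| <= 1)%N &
            (#|[set c | (t c == s a) && ((x c * x a)%R != 0%R)]| <= 1)%N])].

Definition has_D4_subquiver (V Ar : finType) (s t : Ar -> V) : Prop :=
  exists (c u1 u2 u3 : V) (a1 a2 a3 : Ar),
    [/\ uniq [:: c; u1; u2; u3],
        (s a1, t a1) = (c, u1) \/ (s a1, t a1) = (u1, c),
        (s a2, t a2) = (c, u2) \/ (s a2, t a2) = (u2, c) &
        (s a3, t a3) = (c, u3) \/ (s a3, t a3) = (u3, c)].

(* D A = Hom_K(A, K); T(A) = A (+) DA with (a,f)(b,g) = (ab, ag + fb),
   where (a g)(y) = g (y a) and (f b)(y) = f (b y). *)
Definition DA (A : falgType K) := 'Hom(A, K^o).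

Definition triv_mul (A : falgType K) (p q : A * DA A) : A * DA A :=
  (p.1 * q.1, linfun (fun y : A => q.2 (y * p.1) + p.2 (q.1 * y))).

Definition iso_triv_ext (A : falgType K) (B : algType K) : Prop :=
  exists phi : A * DA A -> B,
    [/\ bijective phi,
        (forall (k : K) (p q : A * DA A), phi (k *: p + q) = k *: phi p + phi q),
        (forall p q, phi (triv_mul p q) = phi p * phi q) &
        phi (1, 0) = 1].

(* G = path graph with n.+1 edges E_0, ..., E_n (vertices v_0 .. v_(n+1),
   E_i = {v_i, v_(i+1)}); interior vertices v_1 .. v_n have degree 2.
   Q_G: vertices 'I_n.+1 (the edges); arrows (true, i) = a_i : i -> i+1 and
   (false, i) = b_i : i+1 -> i for i : 'I_n.  Cycles: a_i b_i at i and
   b_i a_i at i+1 (from vertex v_(i+1)).                                    *)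
Definition line_s n (a : bool * 'I_n) : 'I_n.+1 :=
  if a.1 then widen_ord (leqnSn n) a.2 else lift ord0 a.2.
Definition line_t n (a : bool * 'I_n) : 'I_n.+1 :=
  if a.1 then lift ord0 a.2 else widen_ord (leqnSn n) a.2.

Definition line_rels n : seq (seq (K * seq (bool * 'I_n))) :=
  (* C_v - C_v' at Q-vertex i+1 = edge with two non-truncated endpoints *)
  [seq [:: (1, [:: (false, i); (true, i)]); (-1, [:: (true, j); (false, j)])]
     | i <- enum 'I_n, j <- [seq j <- enum 'I_n | val j == (val i).+1]]
  ++ [seq [:: (1, [:: (true, i); (false, i); (true, i)])] | i <- enum 'I_n]
  ++ [seq [:: (1, [:: (false, i); (true, i); (false, i)])] | i <- enum 'I_n]
  (* alpha beta lying in no cycle *)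
  ++ [seq [:: (1, [:: (true, i); (true, j)])]
     | i <- enum 'I_n, j <- [seq j <- enum 'I_n | val j == (val i).+1]]
  ++ [seq [:: (1, [:: (false, j); (false, i)])]
     | i <- enum 'I_n, j <- [seq j <- enum 'I_n | val j == (val i).+1]].

Definition brauer_line (B : algType K) : Prop :=
  exists n : nat, exists (e : 'I_n.+1 -> B) (x : bool * 'I_n -> B),
    presents (@line_s n) (@line_t n) (line_rels n) e x.

(* G = star with N = n.+2 edges E_0 .. E_(N-1), cyclically ordered around
   the centre; Q_G: vertices 'I_N, arrows alpha_i : i -> i+1 (mod N).
   (The star with one edge is the line with one edge, covered above.)      *)
Definition star_path N (i : 'I_N) (k : nat) : seq 'I_N :=
  mkseq (fun j => iter j (@ordS N) i) k.

Definition star_rels n : seq (seq (K * seq 'I_n.+2)) :=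
  (* only relations of type C_v alpha_1; the other vertices are truncated
     and every composable alpha beta lies in the cycle *)
  [seq [:: (1, star_path i n.+3)] | i <- enum 'I_n.+2].

Definition brauer_star (B : algType K) : Prop :=
  exists n : nat, exists (e : 'I_n.+2 -> B) (x : 'I_n.+2 -> B),
    presents (@id 'I_n.+2) (@ordS n.+2) (star_rels n) e x.

End Defs.

(* Main.v *)
From HB Require Import structures.
From mathcomp Require Import all_boot all_order all_algebra all_field.
Require Import Defs.
From mathcomp Require Import ring zify.
Set Implicit Arguments. Unset Strict Implicit. Unset Printing Implicit Defensive.
Import GRing.Theory.
Local Open Scope ring_scope.

Section T2sec.
Variable K : fieldType.
Definition T2 : Type := (K^o * K^o * K^o)%type.
HB.instance Definition _ := GRing.Lmodule.copy T2 (K^o * K^o * K^o)%type.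
Definition t2mul (p q : T2) : T2 :=
  (p.1.1 * q.1.1, p.1.1 * q.1.2 + p.1.2 * q.2, p.2 * q.2).
Definition t2one : T2 := (1, 0, 1).
Lemma t2mulA : associative t2mul.
Proof. move=> [[a b] c] [[d e] f] [[g h] i]; rewrite /t2mul /=.
congr (_, _, _); rewrite ?mulrA // !mulrDr !mulrDl !mulrA addrA; congr (_ + _ + _). Qed.
Lemma t2mul1 : left_id t2one t2mul.
Proof. move=> [[a b] c]; rewrite /t2mul /= !mul1r mul0r addr0 //. Qed.
Lemma t2mulr1 : right_id t2one t2mul.
Proof. move=> [[a b] c]; rewrite /t2mul /= !mulr1 mulr0 add0r //. Qed.
Lemma t2mulDl : left_distributive t2mul +%R.
Proof. move=> [[a b] c] [[d e] f] [[g h] i]; rewrite /t2mul /=.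
congr (_, _, _); rewrite ?mulrDl // addrACA //. Qed.
Lemma t2mulDr : right_distributive t2mul +%R.
Proof. move=> [[a b] c] [[d e] f] [[g h] i]; rewrite /t2mul /=.
congr (_, _, _); rewrite ?mulrDr // addrACA //. Qed.
Lemma t2one_neq0 : t2one != 0.
Proof. apply/eqP => /(congr1 (fun p : T2 => p.2)) /= /eqP; rewrite oner_eq0 //. Qed.
HB.instance Definition _ := GRing.Zmodule_isNzRing.Build T2
  t2mulA t2mul1 t2mulr1 t2mulDl t2mulDr t2one_neq0.
Lemma t2scaleAl (k : K) (u v : T2) : k *: (u * v : T2) = ((k *: u : T2) * v : T2).
Proof. move: u v => [[a b] c] [[d e] f].
change ((k *: (a*d, a*e + b*f, c*f) : T2) = t2mul (k*:a, k*:b, k*:c) (d, e, f)).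
rewrite /t2mul /=. congr (_,_,_); rewrite /GRing.scale /= ?mulrA ?mulrDr ?mulrA //. Qed.
Lemma t2scaleAr (k : K) (u v : T2) : k *: (u * v : T2) = (u * (k *: v : T2) : T2).
Proof. move: u v => [[a b] c] [[d e] f].
change ((k *: (a*d, a*e + b*f, c*f) : T2) = t2mul (a, b, c) (k*:d, k*:e, k*:f)).
rewrite /t2mul /=. congr (_,_,_); rewrite /GRing.scale /= ?mulrDr ?mulrA ?[k * _]mulrC ?mulrA //. Qed.
HB.instance Definition _ := GRing.Lmodule_isLalgebra.Build K T2 t2scaleAl.
HB.instance Definition _ := GRing.Lalgebra_isAlgebra.Build K T2 t2scaleAr.
End T2sec.

Section Main.
Variable K : fieldType.
Local Notation T := (T2 K).
Definition mkT (a b c : K) : T := (a, b, c).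
Definition t11 (p : T) : K := p.1.1.
Definition t12 (p : T) : K := p.1.2.
Definition t22 (p : T) : K := p.2.
Lemma mkT_mul a b c a' b' c' : mkT a b c * mkT a' b' c' = mkT (a*a') (a*b' + b*c') (c*c').
Proof. by []. Qed.
Lemma mkT_add a b c a' b' c' : mkT a b c + mkT a' b' c' = mkT (a+a') (b+b') (c+c').
Proof. by []. Qed.
Lemma mkT0 : (0 : T) = mkT 0 0 0. Proof. by []. Qed.
Lemma mkT1 : (1 : T) = mkT 1 0 1. Proof. by []. Qed.
Lemma mkTE (p : T) : p = mkT (t11 p) (t12 p) (t22 p). Proof. by case: p => [[]]. Qed.
Lemma mkT_inj a b c a' b' c' : mkT a b c = mkT a' b' c' -> [/\ a = a', b = b' & c = c'].
Proof. by case. Qed.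
Lemma t11_mul (p q : T) : t11 (p * q) = t11 p * t11 q.
Proof. by rewrite (mkTE p) (mkTE q). Qed.
Lemma t22_mul (p q : T) : t22 (p * q) = t22 p * t22 q.
Proof. by rewrite (mkTE p) (mkTE q). Qed.
Lemma t12_mul (p q : T) : t12 (p * q) = t11 p * t12 q + t12 p * t22 q.
Proof. by rewrite (mkTE p) (mkTE q). Qed.
Lemma t11_lin k (p q : T) : t11 (k *: p + q) = k * t11 p + t11 q.
Proof. by rewrite (mkTE p) (mkTE q). Qed.
Lemma t22_lin k (p q : T) : t22 (k *: p + q) = k * t22 p + t22 q.
Proof. by rewrite (mkTE p) (mkTE q). Qed.
Lemma t12_lin k (p q : T) : t12 (k *: p + q) = k * t12 p + t12 q.
Proof. by rewrite (mkTE p) (mkTE q). Qed.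

Section Hom.
Variables (B C D : algType K).

Lemma hom0 (f : B -> C) : alg_hom f -> f 0 = 0.
Proof. case=> hl _ _; have := hl 1 0 0; rewrite scaler0 add0r scale1r => h.
by have := congr1 (fun z => z - f 0) h; rewrite subrr addrK => <-. Qed.
Lemma homD (f : B -> C) : alg_hom f -> forall u v, f (u + v) = f u + f v.
Proof. move=> [hl _ _] u v; have := hl 1 u v; by rewrite !scale1r. Qed.
Lemma homZ (f : B -> C) : alg_hom f -> forall k u, f (k *: u) = k *: f u.
Proof. move=> hf k u; have := hom0 hf; case: hf=> hl _ _ h0.
by rewrite -[k *: u]addr0 hl h0 addr0. Qed.
Lemma homM (f : B -> C) : alg_hom f -> forall u v, f (u * v) = f u * f v.
Proof. by case. Qed.
Lemma hom1 (f : B -> C) : alg_hom f -> f 1 = 1.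
Proof. by case. Qed.

End Hom.
Section Hom2.
Variables (B C D : algType K).
Lemma hom_comp (f : B -> C) (g : C -> D) : alg_hom f -> alg_hom g -> alg_hom (g \o f).
Proof. move=> hf hg; rewrite /alg_hom /=; split.
- by move=> k u v; rewrite (homD hf) (homZ hf) (homD hg) (homZ hg).
- by move=> u v; rewrite (homM hf) (homM hg).
- by rewrite (hom1 hf) (hom1 hg). Qed.

Lemma hom_sum (f : B -> C) (I : Type) (r : seq I) (P : pred I) (F : I -> B) :
  alg_hom f -> f (\sum_(i <- r | P i) F i) = \sum_(i <- r | P i) f (F i).
Proof. move=> hf; exact: (big_morph f (homD hf) (hom0 hf)). Qed.

Lemma hom_path (f : B -> C) (Ar : Type) (x : Ar -> B) p :
  alg_hom f -> f (path_eval x p) = path_eval (f \o x) p.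
Proof. move=> hf; rewrite /path_eval; exact: (big_morph f (homM hf) (hom1 hf)). Qed.

Lemma hom_rel (f : B -> C) (Ar : Type) (x : Ar -> B) r :
  alg_hom f -> f (rel_eval x r) = rel_eval (f \o x) r.
Proof. move=> hf; rewrite /rel_eval hom_sum //; apply: eq_bigr => c _.
by rewrite homZ // hom_path. Qed.

Lemma hom_gens (f : B -> C) (V Ar : finType) (s t : Ar -> V) e x :
  alg_hom f -> quiver_gens s t e x -> quiver_gens s t (f \o e) (f \o x).
Proof. move=> hf [h1 h2 h3]; split=> /=.
- by rewrite -hom_sum // h1 hom1.
- by move=> i j; rewrite -homM // h2; case: eqP => // _; rewrite hom0.
- by move=> a; rewrite -!homM // -h3. Qed.

Lemma hom_rels (f : B -> C) (Ar : eqType) (x : Ar -> B) R :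
  alg_hom f -> rels_hold x R -> rels_hold (f \o x) R.
Proof. by move=> hf h r /h; rewrite -hom_rel // => ->; rewrite hom0. Qed.

Lemma hom_ext (V Ar : finType) (s t : Ar -> V) R (e : V -> B) (x : Ar -> B) (f g : B -> C) :
  presents s t R e x -> alg_hom f -> alg_hom g ->
  (forall i, f (e i) = g (e i)) -> (forall a, f (x a) = g (x a)) -> f = g.
Proof.
case=> gens rels univ hf hg he hx.
have [f0 [_ uq]] := univ C (f \o e) (f \o x) (hom_gens hf gens) (hom_rels hf rels).
rewrite -(uq f) ?(uq g) //; split=> // i; by rewrite /= ?he ?hx.
Qed.
End Hom2.

Section Chars.
Variables (B : algType K) (W Br : finType) (sB tB : Br -> W).
Variables (RB : seq (seq (K * seq Br))) (eB : W -> B) (xB : Br -> B).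

Lemma char_vertex (chi : B -> K^o) : presents sB tB RB eB xB -> alg_hom chi ->
  exists j, forall k, chi (eB k) = (k == j)%:R.
Proof.
move=> [gens _ _] hc; have [s1 s2 _] := hom_gens hc gens.
have idem k : (chi (eB k) : K) * chi (eB k) = chi (eB k) by have := s2 k k; rewrite eqxx.
case: (pickP (fun j => (chi (eB j) : K) != 0)) => [j hj|h0]; last first.
  exfalso; move: s1; rewrite big1 => [/esym/eqP|i _]; first by rewrite oner_eq0.
  by move: (h0 i) => /negbFE/eqP.
exists j => k.
have hj1 : (chi (eB j) : K) = 1 by apply: (mulfI hj); rewrite mulr1 idem.
have [->|nkj] := eqVneq k j; first by rewrite ?eqxx hj1.
have := s2 k j; rewrite (negbTE nkj) /= hj1 mulr1 => -> //.
Qed.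

Lemma char_noloop (chi : B -> K^o) : presents sB tB RB eB xB -> alg_hom chi ->
  (forall b, sB b != tB b) -> forall b, chi (xB b) = 0.
Proof.
move=> pr hc nl b; have [j hj] := char_vertex pr hc.
case: pr => [gens _ _]; have [_ _ s3] := hom_gens hc gens.
move: (s3 b) => /= ->; rewrite !hj; have [e1|n1] := eqVneq (sB b) j; last by rewrite /= ?mulr0n !mul0r.
have [e2|n2] := eqVneq (tB b) j; last by rewrite /= ?mulr0n mulr0.
by move: (nl b); rewrite e1 e2 eqxx.
Qed.

Lemma char_uniq (chi1 chi2 : B -> K^o) j : presents sB tB RB eB xB ->
  (forall b, sB b != tB b) -> alg_hom chi1 -> alg_hom chi2 ->
  chi1 (eB j) = 1 -> chi2 (eB j) = 1 -> chi1 = chi2.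
Proof.
move=> pr nl h1 h2 c1 c2.
have [j1 e1] := char_vertex pr h1; have [j2 e2] := char_vertex pr h2.
have ej1 : j1 = j.
  apply/eqP/negPn/negP => nj; move: c1; rewrite e1 eq_sym (negbTE nj) /= => /esym/eqP.
  by rewrite oner_eq0.
have ej2 : j2 = j.
  apply/eqP/negPn/negP => nj; move: c2; rewrite e2 eq_sym (negbTE nj) /= => /esym/eqP.
  by rewrite oner_eq0.
apply: (hom_ext pr h1 h2) => [i|a]; first by rewrite e1 e2 ej1 ej2.
by rewrite !(char_noloop pr).
Qed.
End Chars.

Lemma natb0 : ((false%:R : K) = 0). Proof. by []. Qed.
Lemma natb1 : ((true%:R : K) = 1). Proof. by []. Qed.
Lemma t12_0 : t12 0 = 0. Proof. by []. Qed.
Lemma mkT_scale (k a b c : K) : k *: mkT a b c = mkT (k*a) (k*b) (k*c).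
Proof. by []. Qed.

Section Arrow.
Variables (B : algType K) (W Br : finType) (sB tB : Br -> W).
Variables (RB : seq (seq (K * seq Br))) (eB : W -> B) (xB : Br -> B).

Lemma arrow_lemma (g : B -> T) j1 j2 : presents sB tB RB eB xB -> alg_hom g ->
 (forall k, t11 (g (eB k)) = (k == j1)%:R) -> (forall k, t22 (g (eB k)) = (k == j2)%:R) ->
 (forall b, t11 (g (xB b)) = 0) -> (forall b, t22 (g (xB b)) = 0) -> j1 != j2 ->
 (forall b, ~~ ((sB b == j1) && (tB b == j2))) ->
 forall z, t12 (g z) = t12 (g (eB j1)) * (t11 (g z) - t22 (g z)).
Proof.
move=> pr hg h11 h22 x11 x22 nj na.
set mu := t12 (g (eB j1)).
pose g' (z : B) : T := mkT (t11 (g z)) (mu * (t11 (g z) - t22 (g z))) (t22 (g z)).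
have hg' : alg_hom g'.
  split.
  - move=> k u v; rewrite /g' (homD hg) (homZ hg) t11_lin t22_lin mkT_scale mkT_add.
    congr mkT; ring.
  - move=> u v; rewrite /g' (homM hg) t11_mul t22_mul mkT_mul; congr mkT; ring.
  - by rewrite /g' (hom1 hg) mkT1 /t11 /t22 /= subrr mulr0.
have [gens _ _] := pr; have [_ s2 s3] := hom_gens hg gens.
have E : g = g'.
  apply: (hom_ext pr hg hg') => [i|a].
    rewrite [LHS]mkTE /g' !h11 !h22; congr mkT.
    have idm := s2 i i; rewrite eqxx /= in idm.
    have := congr1 t12 idm; rewrite t12_mul h11 h22.
    have [ei1|ni1] := eqVneq i j1.
      by rewrite ei1 (negbTE nj) /= => _; rewrite natb1 natb0 subr0 mulr1.
    have [ei2|ni2] := eqVneq i j2.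
      move=> _; rewrite ei2 /= natb1 natb0 sub0r mulrN1.
      have := s2 j1 j2; rewrite (negbTE nj) /= => o.
      have := congr1 t12 o; rewrite t12_mul h11 h22 !eqxx /= natb1 mul1r mulr1 t12_0.
      by move/eqP; rewrite addr_eq0 => /eqP.
    by rewrite /= natb0 !mul0r mulr0 add0r subr0 mulr0 => <-.
  rewrite [LHS]mkTE /g' x11 x22 subrr mulr0; congr mkT.
  have := congr1 t12 (s3 a); rewrite /= !t12_mul !t11_mul x11 !h11 !h22 x22.
  rewrite mulr0 mul0r add0r mulr0 addr0.
  have := na a; case: (sB a == j1); case: (tB a == j2) => //= _;
    by rewrite ?natb0 ?natb1 ?mul0r ?mulr0.
move=> z; have := congr1 (fun f => t12 (f z)) E; rewrite /g' /= => ->.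
by rewrite E.
Qed.
End Arrow.

Lemma t11_hom : alg_hom (t11 : T -> K^o).
Proof. split; [exact: t11_lin | exact: t11_mul | by []]. Qed.
Lemma t22_hom : alg_hom (t22 : T -> K^o).
Proof. split; [exact: t22_lin | exact: t22_mul | by []]. Qed.

Lemma natbM (V : eqType) (i j p : V) :
  ((i == p)%:R * (j == p)%:R : K) = if i == j then (i == p)%:R else 0.
Proof.
case E3: (i == j).
  by move/eqP: E3 => ->; case: (j == p); rewrite ?natb1 ?natb0 ?mulr1 ?mulr0.
case E1: (i == p); case E2: (j == p); rewrite ?natb1 ?natb0 ?mulr1 ?mulr0 ?mul0r //.
by move/eqP: E1 => E1; move/eqP: E2 => E2; move: E3; rewrite E1 E2 eqxx.
Qed.

Section ASide.
Variables (A : algType K) (V Ar : finType) (s t : Ar -> V) (Rq : seq (Ar * Ar)).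
Variables (e : V -> A) (x : Ar -> A).

Lemma mono_rels (C : algType K) (y : Ar -> C) :
  (forall a b, y a * y b = 0) -> rels_hold y (@monomial_rels K _ Rq).
Proof.
move=> h r /mapP [p _ ->]; rewrite /rel_eval /path_eval big_cons big_nil /=.
by rewrite big_cons big_cons big_nil mulr1 h scaler0 addr0.
Qed.

Lemma exists_char : presents s t (@monomial_rels K _ Rq) e x -> forall v,
  exists ch : A -> K^o, [/\ alg_hom ch, forall w, ch (e w) = (w == v)%:R
                         & forall a, ch (x a) = 0].
Proof.
move=> [_ _ univ] v.
have G : quiver_gens s t (fun w => ((w == v)%:R : K^o)) (fun _ => (0 : K^o)).
  split.
  - rewrite (bigD1 v) //= eqxx big1 ?addr0 // => w /negbTE -> //.
  - by move=> i j; rewrite natbM.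
  - by move=> a; rewrite mulr0 mul0r.
have Rl : rels_hold (fun _ => (0 : K^o)) (@monomial_rels K _ Rq).
  by apply: mono_rels => a b; rewrite mulr0.
have [ch [[hc he hx] _]] := univ _ _ _ G Rl.
by exists ch; split.
Qed.

Lemma exists_h : presents s t (@monomial_rels K _ Rq) e x -> forall a0, s a0 != t a0 ->
  exists h : A -> T, [/\ alg_hom h, forall w, h (e w) = mkT (w == s a0)%:R 0 (w == t a0)%:R
                         & forall a, h (x a) = mkT 0 (a == a0)%:R 0].
Proof.
move=> [_ _ univ] a0 npq.
have G : quiver_gens s t (fun w => mkT (w == s a0)%:R 0 (w == t a0)%:R)
                         (fun a => mkT 0 (a == a0)%:R 0).
  split.
  - rewrite (bigD1 (s a0)) //= (bigD1 (t a0)) /=; last by rewrite eq_sym npq.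
    rewrite big1 => [|w /andP [/negbTE -> /negbTE ->] //].
    rewrite eqxx (negbTE npq) eq_sym (negbTE npq) eqxx mkT0 !mkT_add natb0 natb1 mkT1.
    by congr mkT; rewrite /mkT /=; ring.
  - move=> i j; rewrite mkT_mul !natbM mulr0 mul0r addr0; case: (i == j) => //.
  - move=> a; rewrite !mkT_mul; have [->|na] := eqVneq a a0.
      by rewrite !eqxx natb1; congr mkT; rewrite /mkT /=; ring.
    by rewrite natb0; congr mkT; rewrite /mkT /=; ring.
have Rl : rels_hold (fun a => mkT 0 (a == a0)%:R 0) (@monomial_rels K _ Rq).
  by apply: mono_rels => a b; rewrite mkT_mul !mul0r mulr0 addr0.
have [h [[hh he hx] _]] := univ _ _ _ G Rl.
by exists h; split.
Qed.
End ASide.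

Lemma key (A : falgType K) (V Ar : finType) (s t : Ar -> V) (Rq : seq (Ar * Ar))
  (e : V -> A) (x : Ar -> A) (B : algType K) (W Br : finType) (sB tB : Br -> W)
  (RB : seq (seq (K * seq Br))) (eB : W -> B) (xB : Br -> B) :
  presents s t (@monomial_rels K _ Rq) e x -> presents sB tB RB eB xB ->
  (forall b, sB b != tB b) -> iso_triv_ext A B ->
  exists J : V -> W, (forall v w, v != w -> J v != J w) /\
    (forall a, s a != t a -> exists b, sB b = J (s a) /\ tB b = J (t a)).
Proof.
move=> prA prB nl [phi [bij lin mul one]].
have [psi phK psK] := bij.
pose F (b : B) : A := (psi b).1.
have hF : alg_hom F.
  split.
  - move=> k u v; rewrite /F.
    have -> : psi (k *: u + v) = k *: psi u + psi v.
      by apply: (can_inj phK); rewrite lin !psK.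
    by [].
  - move=> u v; rewrite /F.
    have -> : psi (u * v) = triv_mul (psi u) (psi v).
      by apply: (can_inj phK); rewrite mul !psK.
    by [].
  - rewrite /F; have -> : psi 1 = (1, 0) by apply: (can_inj phK); rewrite one psK.
    by [].
have Fphi a : F (phi (a, 0)) = a by rewrite /F phK.
have [ch chP] := fin_all_exists (exists_char prA).
have hch v : alg_hom (ch v \o F) by apply: hom_comp => //; case: (chP v).
have [J JP] := fin_all_exists (fun v => char_vertex prB (hch v)).
have chBe v w : (ch v \o F) (phi (e w, 0)) = (w == v)%:R.
  by rewrite /= Fphi; case: (chP v) => _ -> _.
have Jinj v w : v != w -> J v != J w.
  move=> nvw; apply/eqP => Jeq.
  have E : ch v \o F = ch w \o F.
    apply: (char_uniq (j := J v) prB nl (hch v) (hch w)).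
      by rewrite JP eqxx.
    by rewrite Jeq JP eqxx.
  have := congr1 (fun f => f (phi (e v, 0))) E; rewrite !chBe eqxx (negbTE nvw) /=.
  by move/eqP; rewrite oner_eq0.
exists J; split => // a nst.
have [h [hh he hx]] := exists_h prA nst.
have hg : alg_hom (h \o F) := hom_comp hF hh.
have t11h : t11 \o h = ch (s a).
  apply: (hom_ext prA (hom_comp hh t11_hom)); first by case: (chP (s a)).
    by move=> w; rewrite /= he; case: (chP (s a)) => _ -> _.
  by move=> b; rewrite /= hx; case: (chP (s a)) => _ _ ->.
have t22h : t22 \o h = ch (t a).
  apply: (hom_ext prA (hom_comp hh t22_hom)); first by case: (chP (t a)).
    by move=> w; rewrite /= he; case: (chP (t a)) => _ -> _.
  by move=> b; rewrite /= hx; case: (chP (t a)) => _ _ ->.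
have E11 z : t11 (h (F z)) = (ch (s a) \o F) z by rewrite /= -t11h.
have E22 z : t22 (h (F z)) = (ch (t a) \o F) z by rewrite /= -t22h.
case: (boolP [exists b, (sB b == J (s a)) && (tB b == J (t a))]).
  by move=> /existsP [b /andP [/eqP h1 /eqP h2]]; exists b.
move=> none; exfalso.
have na b : ~~ ((sB b == J (s a)) && (tB b == J (t a))).
  by move: none; rewrite negb_exists => /forallP.
have H1 k : t11 ((h \o F) (eB k)) = (k == J (s a))%:R by rewrite /= E11 JP.
have H2 k : t22 ((h \o F) (eB k)) = (k == J (t a))%:R by rewrite /= E22 JP.
have H3 b : t11 ((h \o F) (xB b)) = 0 by rewrite /= E11 (char_noloop prB (hch _) nl).
have H4 b : t22 ((h \o F) (xB b)) = 0 by rewrite /= E22 (char_noloop prB (hch _) nl).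
have := arrow_lemma prB hg H1 H2 H3 H4 (Jinj _ _ nst) na (phi (x a, 0)).
rewrite /= !E11 !E22 /= Fphi hx eqxx.
have -> : ch (s a) (x a) = 0 by case: (chP (s a)).
have -> : ch (t a) (x a) = 0 by case: (chP (t a)).
rewrite subrr mulr0 /t12 /= natb1 => /eqP; by rewrite oner_eq0.
Qed.
End Main.

Lemma line_adj n (b : bool * 'I_n) :
  (nat_of_ord (line_s b)).+1 = line_t b \/ (nat_of_ord (line_t b)).+1 = line_s b.
Proof. by case: b => [[] i]; [left|right]; rewrite /line_s /line_t /= /bump leq0n add1n. Qed.

Lemma line_nl n (b : bool * 'I_n) : line_s b != line_t b.
Proof. by apply/eqP => E; case: (line_adj b); rewrite E => /esym/n_Sn. Qed.

Lemma star_nl n (i : 'I_n.+2) : id i != ordS i.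
Proof.
apply/eqP => /(congr1 val) /= E; have hi := ltn_ord i.
have [eq|lt] : (i.+1 = n.+2 \/ i.+1 < n.+2)%N by lia.
  by rewrite eq modnn in E; lia.
by rewrite modn_small in E; lia.
Qed.

Theorem lemma3p5 (K : closedFieldType) (A : falgType K)
    (V Ar : finType) (s t : Ar -> V) (Rq : seq (Ar * Ar))
    (e : V -> A) (x : Ar -> A) :
  gentle_presentation s t Rq e x ->
  has_D4_subquiver s t ->
  forall B : algType K, iso_triv_ext A B -> ~ brauer_line B /\ ~ brauer_star B.
Proof.
move=> [prA _ _ _ _] [c [u1 [u2 [u3 [a1 [a2 [a3 [U h1 h2 h3]]]]]]]] B iso.
move: U => /=; rewrite !inE !negb_or => /andP [/and3P [cu1 cu2 cu3] /andP [/andP [u12 u13] /andP [u23 _]]].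
have nb : forall (W Br : finType) (sB tB : Br -> W) RB (eB : W -> B) xB,
    presents sB tB RB eB xB -> (forall b, sB b != tB b) ->
  exists jc j1 j2 j3, [/\ [/\ j1 != j2, j1 != j3 & j2 != j3],
    exists b, (sB b = jc /\ tB b = j1) \/ (sB b = j1 /\ tB b = jc),
    exists b, (sB b = jc /\ tB b = j2) \/ (sB b = j2 /\ tB b = jc) &
    exists b, (sB b = jc /\ tB b = j3) \/ (sB b = j3 /\ tB b = jc)].
  move=> W Br sB tB RB eB xB prB nl.
  have [J [Jinj Jar]] := key prA prB nl iso.
  have ar a u : c != u -> (s a, t a) = (c, u) \/ (s a, t a) = (u, c) ->
      exists b, (sB b = J c /\ tB b = J u) \/ (sB b = J u /\ tB b = J c).
    move=> cu [[E1 E2]|[E1 E2]].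
      have [|b [B1 B2]] := Jar a; first by rewrite E1 E2.
      by exists b; left; rewrite B1 B2 E1 E2.
    have [|b [B1 B2]] := Jar a; first by rewrite E1 E2 eq_sym.
    by exists b; right; rewrite B1 B2 E1 E2.
  exists (J c), (J u1), (J u2), (J u3); split.
  - by split; apply: Jinj.
  - exact: ar h1.
  - exact: ar h2.
  - exact: ar h3.
split.
- move=> [n [eB [xB prB]]].
  have [jc [j1 [j2 [j3 [[d12 d13 d23] [b1 H1] [b2 H2] [b3 H3]]]]]] := nb _ _ _ _ _ _ _ prB (@line_nl n).
  have v12 : nat_of_ord j1 <> j2 by move=> /ord_inj E; move: d12; rewrite E eqxx.
  have v13 : nat_of_ord j1 <> j3 by move=> /ord_inj E; move: d13; rewrite E eqxx.
  have v23 : nat_of_ord j2 <> j3 by move=> /ord_inj E; move: d23; rewrite E eqxx.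
  have adj (b : bool * 'I_n) j : (line_s b = jc /\ line_t b = j) \/ (line_s b = j /\ line_t b = jc) ->
      ((nat_of_ord jc).+1 = j \/ (nat_of_ord j).+1 = jc)%N.
    by case=> [[<- <-]|[<- <-]]; case: (line_adj b); auto.
  have := adj _ _ H1; have := adj _ _ H2; have := adj _ _ H3; lia.
- move=> [n [eB [xB prB]]].
  have [jc [j1 [j2 [j3 [[d12 d13 d23] [b1 H1] [b2 H2] [b3 H3]]]]]] := nb _ _ _ _ _ _ _ prB (@star_nl n).
  have adj b j : (id b = jc /\ ordS b = j) \/ (id b = j /\ ordS b = jc) ->
      j = ordS jc \/ ordS j = jc.
    by case=> [[<- <-]|[<- <-]]; auto.
  have := adj _ _ H1; have := adj _ _ H2; have := adj _ _ H3.
  move=> A3 A2 A1.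
  case: A1 => E1; case: A2 => E2; case: A3 => E3;
  first [ by move: d12; rewrite E1 E2 eqxx
        | by move: d13; rewrite E1 E3 eqxx
        | by move: d23; rewrite E2 E3 eqxx
        | by move: d12; rewrite (ordS_inj (etrans E1 (esym E2))) eqxx
        | by move: d13; rewrite (ordS_inj (etrans E1 (esym E3))) eqxx
        | by move: d23; rewrite (ordS_inj (etrans E2 (esym E3))) eqxx ].
Qed.
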